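(* Let $n\ge1$, $\epsilon>0$, $\delta>0$ be arbitrary. For every $C>0$ the open subset $B(\epsilon)\times\mathbb D_{<\delta}(T^*\mathbb T^n)$ of $(\mathbb R^3\times T^*\mathbb T^n,\ker(\alpha_{\mathrm{OT}}+\lambda_{\mathrm{can}}))$ contains an embedded hypersurface $$S_C=\mathbb D^2_{\le\pi}\times\Bigl\{(s_1,\dots,s_n;t_1,\dots,t_n)\in\mathbb R^{2n}\ \Bigm|\ |s_j|<C,\ |t_j|<\tfrac{\delta}{2\sqrt n}\text{ for all }j\Bigr\}$$ on which the contact structure induces the singular distribution $\ker\bigl(r\sin r\,d\vartheta-\sum_{j=1}^n t_j\,ds_j\bigr)$, with $(r,\vartheta)$ polar coordinates on the disk.
   Context: $\alpha_{\mathrm{OT}}=\cos r\,dz+r\sin r\,d\vartheta$ on $\mathbb R^3$ in cylindrical coordinates $(r,\vartheta,z)$. Fix a small $\delta_0>0$ and set $B(h)=\mathbb D^2_{<\pi+\delta_0}\times(-h,h)$. On $T^*\mathbb T^n$ use coordinates $(q_1,\dots,q_n;p_1,\dots,p_n)$ with $q_j\in\mathbb R/2\pi\mathbb Z$, $\lambda_{\mathrm{can}}=-\sum_j p_j\,dq_j$, and $\mathbb D_{<\delta}(T^*\mathbb T^n)=\{\|\mathbf p\|<\delta\}$ with the Euclidean norm of $\mathbf p=(p_1,\dots,p_n)$. The induced singular distribution of an embedding $\iota$ is $(D\iota)^{-1}(\xi)$. *)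

(* Defs.v *)
From mathcomp Require Import all_boot all_order all_algebra.
From mathcomp Require Import all_classical all_reals all_analysis.
Set Implicit Arguments. Unset Strict Implicit. Unset Printing Implicit Defensive.
Import Order.TTheory GRing.Theory Num.Theory.
Import numFieldNormedType.Exports.
Local Open Scope ring_scope.
Local Open Scope classical_set_scope.

(* Points of the hypersurface model R^2 x R^n x R^n :
   ((x, y), (s, t)), with (x,y) Cartesian coordinates on the disk. *)
Notation dom R n := ((R * R) * ('rV[R]_n * 'rV[R]_n))%type.
(* Points of R^3 x R^n x R^n = universal cover of R^3 x T^*T^n :
   ((x, y, z), (q, p)), q-coordinates are to be read modulo 2 pi. *)
Notation tgt R n := ((R * R * R) * ('rV[R]_n * 'rV[R]_n))%type.

Definition sinc (R : realType) (r : R) : R := if r == 0 then 1 else sin r / r.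

Fixpoint Ck_on (R : realType) (V W : normedModType R) (U : set V) (k : nat)
  (f : V -> W) : Prop :=
  {within U, continuous f} /\
  match k with
  | 0 => True
  | k'.+1 => (forall x v, U x -> derivable f x v) /\
             (forall v, Ck_on U k' (fun x => 'D_v f x))
  end.

Definition smooth_on (R : realType) (V W : normedModType R) (U : set V)
  (f : V -> W) : Prop := open U /\ forall k, Ck_on U k f.

(* Deck translation by m in the q-coordinates. *)
Definition tgt_shift (R : realType) (n : nat) (a : tgt R n) (m : 'rV[R]_n)
  : tgt R n := (a.1, (a.2.1 + m, a.2.2)).

Definition lattice2pi (R : realType) (n : nat) (m : 'rV[R]_n) : Prop :=
  forall j, exists k : int, m 0 j = 2 * pi * k%:~R.

(* iota : dom -> tgt, read as a map into R^3 x T^*T^n (q mod 2 pi), is a smooth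
   embedding of S: smooth on an open neighbourhood of S, an immersion on S,
   injective on S modulo the deck group, and a homeomorphism onto its image
   (inverse continuous for the quotient metric). *)
Definition embedding_mod (R : realType) (n : nat) (S : set (dom R n))
  (iota : dom R n -> tgt R n) : Prop :=
  [/\ exists U : set (dom R n), S `<=` U /\ smooth_on U iota,
      (forall p v, S p -> 'D_v iota p = 0 -> v = 0),
      (forall p p', S p -> S p' ->
         (exists m, lattice2pi m /\ iota p' = tgt_shift (iota p) m) -> p' = p)
    & (forall p, S p -> forall e : R, 0 < e -> exists2 d : R, 0 < d &
         forall p', S p' ->
           (exists m, lattice2pi m /\ `|iota p' - tgt_shift (iota p) m| < d) ->
           `|p' - p| < e)].

Definition S_C (R : realType) (n : nat) (C delta : R) : set (dom R n) :=
  [set p : dom R n | p.1.1 ^+ 2 + p.1.2 ^+ 2 <= pi ^+ 2 /\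
           forall j, `|p.2.1 0 j| < C /\ `|p.2.2 0 j| < delta / (2 * Num.sqrt n%:R)].

(* B(eps) x D_{<delta}(T^*T^n), with B(h) = D^2_{< pi + delta0} x (-h, h);
   invariant under the deck translations. *)
Definition target_region (R : realType) (n : nat) (delta0 eps delta : R)
  : set (tgt R n) :=
  [set a : tgt R n | a.1.1.1 ^+ 2 + a.1.1.2 ^+ 2 < (pi + delta0) ^+ 2 /\
           `|a.1.2| < eps /\
           Num.sqrt (\sum_(j < n) a.2.2 0 j ^+ 2) < delta].

(* alpha_OT + lambda_can at a, evaluated on w, in Cartesian (x,y):
   cos r dz + r sin r dtheta - sum p_j dq_j, with r dtheta = (x dy - y dx)/r. *)
Definition alpha (R : realType) (n : nat) (a w : tgt R n) : R :=
  let r := Num.sqrt (a.1.1.1 ^+ 2 + a.1.1.2 ^+ 2) in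
  cos r * w.1.2 + sinc r * (a.1.1.1 * w.1.1.2 - a.1.1.2 * w.1.1.1)
  - \sum_(j < n) a.2.2 0 j * w.2.1 0 j.

Definition beta (R : realType) (n : nat) (p v : dom R n) : R :=
  let r := Num.sqrt (p.1.1 ^+ 2 + p.1.2 ^+ 2) in
  sinc r * (p.1.1 * v.1.2 - p.1.2 * v.1.1)
  - \sum_(j < n) p.2.2 0 j * v.2.1 0 j.

(* Main.v *)
Require Import Defs.
From HB Require Import structures.
From mathcomp Require Import all_boot all_order all_algebra.
From mathcomp Require Import all_classical all_reals all_analysis.
From mathcomp Require Import ring lra.
Set Implicit Arguments. Unset Strict Implicit. Unset Printing Implicit Defensive.
Import Order.TTheory GRing.Theory Num.Theory.
Import numFieldNormedType.Exports.
Local Open Scope ring_scope.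
Local Open Scope classical_set_scope.

Section S.
Variable R : realType.

Definition entire (c : nat -> R) := forall x : R, cvgn (pseries c x).
Definition Hc (c : nat -> R) (x : R) : R := limn (pseries c x).

Lemma entire_diffs c : entire c -> entire (pseries_diffs c).
Proof.
move=> ec x.
set K : R := 4 * (`|x| + 1).
have K1 : 1 <= K by rewrite /K; have := normr_ge0 x; lra.
have K0 : 0 < K by rewrite (lt_le_trans ltr01).
have [A [Areal Af]] := cvg_series_bounded (ec K).
pose B : R := `|A + 1|.
have cB : forall n, `|c n| * K ^+ n <= B.
  have hB : A < B by rewrite (lt_le_trans _ (ler_norm _))// ltrDl ltr01.
  move=> n; have /= := Af B hB n I.
  by rewrite normrM normrX (ger0_norm (ltW K0)).
apply: normed_cvg; rewrite /normed_series_of /=.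
have G0 : forall n, 0 <= geometric B 2^-1 n.
  move=> n; rewrite /geometric /=; apply: mulr_ge0; first exact: normr_ge0.
  by apply: exprn_ge0; rewrite invr_ge0 ler0n.
have GC : cvgn (series (geometric B 2^-1)).
  by apply: is_cvg_geometric_series; rewrite ger0_norm ?invr_ge0 ?ler0n// invf_lt1 ?ltr1n.
have LE : forall n, `|pseries_diffs c n * x ^+ n| <= geometric B 2^-1 n.
  move=> n; rewrite /geometric /= /pseries_diffs normrM normrM normrX normr_nat.
  have Kn : 0 < K ^+ n.+1 by rewrite exprn_gt0.
  have h : `|c n.+1| <= B / K ^+ n.+1 by rewrite ler_pdivlMr.
  apply: (@le_trans _ _ (n.+1%:R * (B / K ^+ n.+1) * `|x| ^+ n)).
    by rewrite ler_wpM2r ?exprn_ge0// ler_wpM2l.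
  have h1 : n.+1%:R <= (2 : R) ^+ n.
    by rewrite -natrX ler_nat; apply: ltn_expl.
  have h2 : `|x| ^+ n <= (`|x| + 1) ^+ n.
    by rewrite lerXn2r// ?nnegrE// ?addr_ge0// lerDl.
  have key : n.+1%:R * `|x| ^+ n * 2 ^+ n <= K ^+ n.+1.
    apply: (@le_trans _ _ (2 ^+ n * (`|x| + 1) ^+ n * 2 ^+ n)).
      by rewrite ler_wpM2r ?exprn_ge0// ler_pM// exprn_ge0.
    rewrite exprS /K -mulrA [_ * 2 ^+ n]mulrC mulrA -!exprMn.
    have -> : (2 * 2 : R) = 4 by rewrite -natrM.
    rewrite -[X in X <= _]mul1r ler_wpM2r// exprn_ge0// mulr_ge0// addr_ge0.
  have B0 : 0 <= B by exact: normr_ge0.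
  have P2 : 0 < (2 : R) ^+ n by rewrite exprn_gt0.
  have -> : n.+1%:R * (B / K ^+ n.+1) * `|x| ^+ n = B * ((n.+1%:R * `|x| ^+ n) / K ^+ n.+1) by ring.
  by rewrite ler_wpM2l// ler_pdivrMr// exprVn [X in _ <= X]mulrC ler_pdivlMr//.
exact: (series_le_cvg _ G0 LE GC).
Qed.

Lemma Hc_is_derive c (x : R) : entire c -> is_derive x 1 (Hc c) (Hc (pseries_diffs c) x).
Proof.
move=> ec; apply: (@pseries_snd_diffs R c (`|x| + 1)).
- exact: ec.
- exact: entire_diffs.
- exact/entire_diffs/entire_diffs.
- by rewrite [X in _ < X]ger0_norm ?addr_ge0// ltrDl.
Qed.

Lemma Hc_diff c (x : R) : entire c -> differentiable (Hc c) x.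
Proof.
by move=> ec; apply/derivable1_diffP; have [] := Hc_is_derive x ec.
Qed.

Lemma Hc_d c (x : R) : entire c -> 'd (Hc c) x = (fun h => h * Hc (pseries_diffs c) x) :> (R -> R).
Proof.
move=> ec; rewrite diff1E; last exact: Hc_diff.
by rewrite derive1E; have [_ ->] := Hc_is_derive x ec.
Qed.

Definition cc (n : nat) : R := (-1) ^ n / (n.*2)`!%:R.

Lemma pseries_cc u : 0 <= u -> pseries cc u = series (cos_coeff' (Num.sqrt u)).
Proof.
move=> u0; apply/funext => k; rewrite /pseries /series /=; apply: eq_bigr => i _.
rewrite /cos_coeff' /cc -muln2 mulnC exprM sqr_sqrtr//; ring.
Qed.

Lemma Hc_cc u : 0 <= u -> Hc cc u = cos (Num.sqrt u).
Proof.
by move=> u0; rewrite /Hc pseries_cc//; apply: cvg_lim => //; apply: cvg_cos_coeff'.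
Qed.

Lemma entire_cc : entire cc.
Proof.
move=> x; apply: (@is_cvg_pseries_inside _ _ (`|x| + 1)).
  rewrite pseries_cc ?addr_ge0//; apply/cvg_ex; eexists; exact: cvg_cos_coeff'.
by rewrite [X in _ < X]ger0_norm ?addr_ge0// ltrDl.
Qed.

Section Fam.
Variable V : normedModType R.

Inductive Fm : (V -> R) -> Prop :=
| Fc (c : R) : Fm (fun _ => c)
| Fl (l : V -> R) : (forall x, differentiable l x) -> (forall x v, 'd l x v = l v) -> Fm l
| FH c g : entire c -> Fm g -> Fm (fun x => Hc c (g x))
| Fadd f g : Fm f -> Fm g -> Fm (fun x => f x + g x)
| Fmul f g : Fm f -> Fm g -> Fm (fun x => f x * g x).

Lemma Fm_prop f : Fm f -> (forall x, differentiable f x) /\ forall v, Fm (fun x => 'd f x v).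
Proof.
elim=> {f}.
- move=> c; split=> [x|v]; first exact: (differentiable_cst c x).
  have -> : (fun x => 'd (fun _ : V => c) x v) = fun _ => 0.
    by apply/funext => x; rewrite (diff_cst (V:=V) c x).
  exact: Fc.
- move=> l dl el; split=> // v.
  have -> : (fun x => 'd l x v) = fun _ => l v by apply/funext => x; rewrite el.
  exact: Fc.
- move=> c g ec Fg [dg IH]; split=> [x|v].
    exact: (differentiable_comp (dg x) (Hc_diff _ ec)).
  have -> : (fun x => 'd (fun x => Hc c (g x)) x v) =
      fun x => 'd g x v * Hc (pseries_diffs c) (g x).
    apply/funext => x.
    rewrite (_ : (fun x => Hc c (g x)) = Hc c \o g)//.
    rewrite diff_comp ?(dg x) //=; last exact: Hc_diff. have HH := Hc_d (g x) ec. have HH2 := congr1 (fun F => F ('d g x v)) HH. simpl in HH2. exact HH2.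
  by apply: Fmul; [exact: IH | apply: FH => //; exact: entire_diffs].
- move=> f g _ [df IHf] _ [dg IHg]; split=> [x|v].
    exact: (differentiableD (df x) (dg x)).
  have -> : (fun x => 'd (fun x => f x + g x) x v) = fun x => 'd f x v + 'd g x v.
    apply/funext => x.
    by rewrite (_ : (fun x => f x + g x) = f + g)// diffD.
  exact: Fadd.
- move=> f g Ff [df IHf] Fg [dg IHg]; split=> [x|v].
    exact: (differentiableM (df x) (dg x)).
  have -> : (fun x => 'd (fun x => f x * g x) x v) = fun x => f x * 'd g x v + g x * 'd f x v.
    apply/funext => x.
    by rewrite (_ : (fun x => f x * g x) = f * g)// diffM.
  apply: Fadd; apply: Fmul => //.
Qed.


Section G.
Variable W : normedModType R.

Lemma G_diff (c : W) (L : V -> W) (f : V -> R) (w : W) x :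
  differentiable L x -> differentiable f x ->
  differentiable (fun x => c + L x + f x *: w) x.
Proof.
move=> dL df.
have e : (fun x => c + L x + f x *: w) = (cst c + L) + (fun x => f x *: w) by [].
rewrite e; apply: differentiableD; last exact: differentiableZl.
by apply: differentiableD => //; exact: differentiable_cst.
Qed.

Lemma G_d (c : W) (L : V -> W) (f : V -> R) (w : W) x v :
  differentiable L x -> differentiable f x ->
  'd (fun x => c + L x + f x *: w) x v = 'd L x v + 'd f x v *: w.
Proof.
move=> dL df.
have e : (fun x => c + L x + f x *: w) = (cst c + L) + (fun x => f x *: w) by [].
have d1 : differentiable (cst c + L) x.
  by apply: differentiableD => //; exact: differentiable_cst.
have d2 : differentiable (fun x => f x *: w) x by exact: differentiableZl.
rewrite e (diffD d1 d2) /= (diffD (differentiable_cst c x) dL) /= diff_cst diffZl //= add0r.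
reflexivity. Qed.

Lemma Ck_G k : forall (c : W) (L : V -> W) (f : V -> R) (w : W),
  (forall x, differentiable L x) -> (forall x v, 'd L x v = L v) -> Fm f ->
  Ck_on setT k (fun x => c + L x + f x *: w).
Proof.
elim: k => [|k IH] c L f w dL eL Ff; have [df Fd] := Fm_prop Ff.
  split=> //; apply: continuous_subspaceT => x.
  exact/differentiable_continuous/G_diff.
split.
  apply: continuous_subspaceT => x.
  exact/differentiable_continuous/G_diff.
split.
  by move=> x v _; apply/diff_derivable/G_diff.
move=> v.
have -> : (fun x => 'D_v (fun x => c + L x + f x *: w) x) =
    (fun x => L v + (fun _ => 0 : W) x + 'd f x v *: w).
  apply/funext => x; rewrite deriveE; last exact: G_diff.
  by rewrite G_d// eL addr0.
apply: IH => //.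
- by move=> x u; rewrite (diff_cst (V:=V) (0 : W) x).
Qed.

End G.
End Fam.

Lemma lin_props (U W : normedModType R) (l : U -> W) (M : R) :
  linear l -> 0 <= M -> (forall x, `|l x| <= M * `|x|) ->
  (forall x, differentiable l x) /\ (forall x v, 'd l x v = l v).
Proof.
move=> ll M0 lb.
pose lM := GRing.isLinear.Build _ _ _ _ l ll.
pose lL : {linear U -> W} := HB.pack l lM.
have cl : continuous lL.
  apply: bounded_linear_continuous; apply/linear_boundedP.
  exists M; split; first exact: ger0_real.
  move=> r Mr x; apply: le_trans (lb x) _.
  by rewrite ler_wpM2r// ltW.
split=> [x|x v]; first exact: (linear_differentiable x cl).
by rewrite (diff_lin x cl).
Qed.

Lemma row_entry_le m (M : 'rV[R]_m) j : `|M 0 j| <= `|M|.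
Proof.
have -> : `|M| = mx_norm M by [].
rewrite mx_normrE.
exact: (le_bigmax _ (fun ij : 'I_1 * 'I_m => `|M ij.1 ij.2|) (0, j)).
Qed.

Lemma row_norm_lt m (M : 'rV[R]_m) e : 0 < e -> (forall j, `|M 0 j| < e) -> `|M| < e.
Proof.
move=> e0 H; have -> : `|M| = mx_norm M by [].
rewrite mx_normrE; apply/bigmax_ltP; split=> // -[i j] _ /=.
by rewrite (ord1 i); exact: H.
Qed.

Lemma row_norm_le m (M : 'rV[R]_m) e : 0 <= e -> (forall j, `|M 0 j| <= e) -> `|M| <= e.
Proof.
move=> e0 H; have -> : `|M| = mx_norm M by [].
rewrite mx_normrE; apply/bigmax_leP; split=> // -[i j] _ /=.
by rewrite (ord1 i); exact: H.
Qed.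

Section PairNorm.
Variables U W : normedModType R.
Implicit Types u : U * W.
Lemma norm_fst u : `|u.1| <= `|u|.
Proof. by rewrite prod_normE le_max lexx. Qed.
Lemma norm_snd u : `|u.2| <= `|u|.
Proof. by rewrite prod_normE le_max lexx orbT. Qed.
Lemma norm_pair_lt u e : `|u.1| < e -> `|u.2| < e -> `|u| < e.
Proof. by move=> h1 h2; rewrite prod_normE gt_max h1 h2. Qed.
Lemma norm_pair_le u e : `|u.1| <= e -> `|u.2| <= e -> `|u| <= e.
Proof. by move=> h1 h2; rewrite prod_normE ge_max h1 h2. Qed.
End PairNorm.

Section Lattice.
Variables (Bm Kb : R).
Hypothesis Bm0 : 0 <= Bm.
Hypothesis KbE : pi * Kb = pi + Bm.

Lemma Kb_ge1 : 1 <= Kb.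
Proof.
have pi0 : 0 < pi :> R := pi_gt0 R.
by rewrite -(ler_pM2l pi0) mulr1 KbE lerDl.
Qed.

Lemma lat_bound m (k : 'I_m -> R) : (forall j, `|k j| <= Bm) ->
  `|\sum_(j < m) Kb ^+ j * k j| <= pi * (Kb ^+ m - 1).
Proof.
have K0 : 0 <= Kb by apply: le_trans Kb_ge1.
elim: m k => [|m IH] k kB; first by rewrite big_ord0 normr0 expr0 subrr mulr0.
rewrite big_ord_recr /=.
apply: le_trans (ler_normD _ _) _.
have := IH (fun j => k (widen_ord (leqnSn m) j)) (fun j => kB _) => /= h.
apply: le_trans (lerD h (_ : `|Kb ^+ m * k ord_max| <= Kb ^+ m * Bm)) _.
  by rewrite normrM ger0_norm ?exprn_ge0// ler_wpM2l ?exprn_ge0.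
rewrite exprS; set X := Kb ^+ m.
suff -> : pi * (Kb * X - 1) = pi * (X - 1) + X * Bm by [].
rewrite mulrBr mulrA KbE; ring.
Qed.

Lemma lat_main m (k : 'I_m -> R) : (forall j, `|k j| <= Bm) ->
  (forall j, exists z : int, k j = 2 * pi * z%:~R) ->
  (forall j, k j = 0) \/ pi <= `|\sum_(j < m) Kb ^+ j * k j|.
Proof.
have K0 : 0 <= Kb by apply: le_trans Kb_ge1.
have pi0 : 0 < pi :> R := pi_gt0 R.
elim: m k => [|m IH] k kB kZ; first by left => -[].
rewrite big_ord_recr /=.
set k' := fun j => k (widen_ord (leqnSn m) j).
have kw : forall j : 'I_m, k (lift ord_max j) = k' j.
  by move=> j; rewrite /k'; congr k; apply: val_inj; rewrite /= /bump leqNgt ltn_ord.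
have [km0|kmn0] := eqVneq (k ord_max) 0.
  rewrite km0 mulr0 addr0.
  case: (IH k' (fun j => kB _) (fun j => kZ _)) => [allz|]; last by right.
  left=> j; case: (unliftP ord_max j) => [j' ->|->]//.
  by rewrite kw allz.
right.
have hb := lat_bound (fun j => kB (widen_ord (leqnSn m) j)).
have [z kz] := kZ ord_max.
have z0 : (z%:~R : R) != 0 by apply: contra_neq kmn0; rewrite kz => ->; rewrite mulr0.
have z1 : 1 <= `|(z%:~R : R)| by apply: norm_intr_ge1 => //; exact: intr_int.
have kmb : 2 * pi <= `|k ord_max|.
  have p2 : 0 <= 2 * pi :> R by rewrite mulr_ge0// ltW.
  by rewrite kz normrM (ger0_norm p2) -[X in X <= _]mulr1 ler_wpM2l.
set S' := \sum_(_ < m) _ in hb *.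
have t1 : `|Kb ^+ m * k ord_max| <= `|S' + Kb ^+ m * k ord_max| + `|S'|.
  rewrite -[X in `|X| <= _](addKr S') addrC; exact: ler_normB.
have X0 : 1 <= Kb ^+ m by apply: exprn_ege1; exact: Kb_ge1.
rewrite normrM ger0_norm ?exprn_ge0// in t1.
have : 2 * pi * Kb ^+ m <= Kb ^+ m * `|k ord_max|.
  by rewrite mulrC ler_wpM2l// exprn_ge0.
set X := Kb ^+ m in X0 t1 hb *; set Y := `|k ord_max| in kmb t1 *.
nra.
Qed.
End Lattice.

Lemma cont_eps (U W : normedModType R) (f : U -> W) x : {for x, continuous f} ->
  forall e, 0 < e -> exists2 d, 0 < d & forall y, `|x - y| < d -> `|f x - f y| < e.
Proof.
move=> cf e e0; have /cvgrPdist_lt/(_ e e0) := cf.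
move=> /nbhs_ballP [d d0 H]; exists d => // y xy; apply: H.
by rewrite -ball_normE /=.
Qed.
End S.

Section Main.
Variable R : realType.
Variable n : nat.
Variable eta : R.
Variable a : 'I_n -> R.

Definition zlin (s : 'rV[R]_n) : R := \sum_j a j * s 0 j.
Definition arow : 'rV[R]_n := \row_j a j.
Definition fco (p : dom R n) : R := Hc (@cc R) (p.1.1 ^+ 2 + p.1.2 ^+ 2).
Definition Lmap (p : dom R n) : tgt R n := ((p.1.1, p.1.2, eta * zlin p.2.1), (p.2.1, p.2.2)).
Definition wvec : tgt R n := ((0, 0, 0), (0, eta *: arow)).
Definition iota (p : dom R n) : tgt R n :=
  ((p.1.1, p.1.2, eta * zlin p.2.1), (p.2.1, p.2.2 + (eta * fco p) *: arow)).

Lemma iotaG : iota = fun p => 0 + Lmap p + fco p *: wvec.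
Proof.
apply/funext => -[[x y] [s t]]; rewrite /iota /Lmap /wvec /=.
rewrite add0r.
have pe : forall (A B : Type) (u v : A * B), u.1 = v.1 -> u.2 = v.2 -> u = v.
  by move=> A B [? ?] [? ?] /= -> ->.
apply pe; [apply pe; [apply pe|]|apply pe] => /=.
- by rewrite scaler0 addr0.
- by rewrite scaler0 addr0.
- by rewrite scaler0 addr0.
- by rewrite scaler0 addr0.
- by rewrite scalerA mulrC.
Qed.


Definition Sa : R := \sum_j `|a j|.

Lemma zlin_bound s : `|zlin s| <= Sa * `|s|.
Proof.
rewrite /zlin /Sa mulr_suml; apply: le_trans (ler_norm_sum _ _ _) _.
apply: ler_sum => j _; rewrite normrM ler_wpM2l//; exact: row_entry_le.
Qed.

Lemma Lmap_linear : linear Lmap.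
Proof.
move=> k [[x y] [s t]] [[x' y'] [s' t']].
rewrite /Lmap /=.
have pe : forall (A B : Type) (u v : A * B), u.1 = v.1 -> u.2 = v.2 -> u = v.
  by move=> A B [? ?] [? ?] /= -> ->.
apply pe; [apply pe; [apply pe|]|apply pe] => //=.
have -> : k *: (eta * zlin s) = k * (eta * zlin s) by [].
rewrite mulrA (mulrC k eta) -mulrA -mulrDr; congr (_ * _).
rewrite /zlin mulr_sumr -big_split /=; apply: eq_bigr => j _; rewrite !mxE.
ring.
Qed.

Lemma Lmap_bound p : `|Lmap p| <= (1 + `|eta| * Sa) * `|p|.
Proof.
have S0 : 0 <= Sa by apply: sumr_ge0.
have M1 : `|p| <= (1 + `|eta| * Sa) * `|p|.
  by rewrite -[X in X <= _]mul1r ler_wpM2r// lerDl mulr_ge0.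
have hp1 := norm_fst p; have hp2 := norm_snd p.
have hx := norm_fst p.1; have hy := norm_snd p.1.
have hs := norm_fst p.2; have ht := norm_snd p.2.
apply: norm_pair_le; [apply: norm_pair_le; [apply: norm_pair_le|]|apply: norm_pair_le] => /=.
- by apply: le_trans M1; apply: (le_trans hx).
- by apply: le_trans M1; apply: (le_trans hy).
- rewrite normrM; apply: (@le_trans _ _ (`|eta| * (Sa * `|p|))).
    by rewrite ler_wpM2l// (le_trans (zlin_bound _))// ler_wpM2l// (le_trans hs).
  by rewrite mulrA mulrDl mul1r lerDr.
- by apply: le_trans M1; apply: (le_trans hs).
- by apply: le_trans M1; apply: (le_trans ht).
Qed.

Lemma Lmap_props : (forall x, differentiable Lmap x) /\ (forall x v, 'd Lmap x v = Lmap v).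
Proof.
apply: (@lin_props _ _ _ Lmap (1 + `|eta| * Sa) Lmap_linear) => //.
  by rewrite addr_ge0// mulr_ge0// sumr_ge0.
exact: Lmap_bound.
Qed.

Lemma xco_Fm : Fm (fun p : dom R n => p.1.1).
Proof.
have [h1 h2] : (forall x, differentiable (fun p : dom R n => p.1.1) x) /\
    (forall x v, 'd (fun p : dom R n => p.1.1) x v = v.1.1).
  apply: (@lin_props _ _ _ (fun p : dom R n => p.1.1) 1) => //.
  by move=> p; rewrite mul1r (le_trans (norm_fst _) (norm_fst _)).
by apply: Fl; [exact: h1 | exact: h2].
Qed.

Lemma yco_Fm : Fm (fun p : dom R n => p.1.2).
Proof.
have [h1 h2] : (forall x, differentiable (fun p : dom R n => p.1.2) x) /\
    (forall x v, 'd (fun p : dom R n => p.1.2) x v = v.1.2).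
  apply: (@lin_props _ _ _ (fun p : dom R n => p.1.2) 1) => //.
  by move=> p; rewrite mul1r (le_trans (norm_snd _) (norm_fst _)).
by apply: Fl; [exact: h1 | exact: h2].
Qed.

Lemma fco_Fm : Fm fco.
Proof.
have -> : fco = fun p => Hc (@cc R) (p.1.1 * p.1.1 + p.1.2 * p.1.2).
  by apply/funext => p; rewrite /fco !expr2.
apply: FH; first exact: entire_cc.
by apply: Fadd; apply: Fmul; (exact: xco_Fm || exact: yco_Fm).
Qed.

Lemma fco_cos p : fco p = cos (Num.sqrt (p.1.1 ^+ 2 + p.1.2 ^+ 2)).
Proof. by rewrite /fco Hc_cc// addr_ge0// sqr_ge0. Qed.

Lemma fco_diff p : differentiable fco p.
Proof. by have [h _] := Fm_prop fco_Fm; exact: h. Qed.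

Lemma dfco_zero p v : v.1 = 0 -> 'd fco p v = 0.
Proof.
move=> v10; rewrite -deriveE; last exact: fco_diff.
rewrite /derive.
have -> : (fun h : R => h^-1 *: ((fco \o shift p) (h *: v) - fco p)) = fun _ => 0.
  apply/funext => h /=.
  have E : (h *: v + p).1 = p.1.
    by rewrite (_ : (h *: v + p).1 = h *: v.1 + p.1)// v10 scaler0 add0r.
  by rewrite /fco E subrr scaler0.
apply: cvg_lim => //; exact: cvg_cst.
Qed.

Lemma Diota p v : 'D_v iota p =
  ((v.1.1, v.1.2, eta * zlin v.2.1), (v.2.1, v.2.2 + (eta * 'd fco p v) *: arow)).
Proof.
have [dL eL] := Lmap_props.
rewrite iotaG deriveE; last exact: G_diff (dL p) (fco_diff p).
rewrite G_d ?dL ?fco_diff//.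
have -> : 'd Lmap p v = Lmap v by exact: (eL p v).
case: v => [[x y] [s t]]; rewrite /Lmap /wvec /=.
have pe : forall (A B : Type) (u v : A * B), u.1 = v.1 -> u.2 = v.2 -> u = v.
  by move=> A B [? ?] [? ?] /= -> ->.
apply pe; [apply pe; [apply pe|]|apply pe] => /=; rewrite ?scaler0 ?addr0//.
by rewrite scalerA mulrC.
exact: fco_diff.
Qed.

Lemma iota_Ck k : Ck_on setT k iota.
Proof.
have [dL eL] := Lmap_props.
rewrite iotaG; apply: Ck_G => //; exact: fco_Fm.
Qed.

Lemma alpha_iota p v : alpha (iota p) ('D_v iota p) = beta p v.
Proof.
rewrite Diota /alpha /beta /iota /= -fco_cos.
set c := fco p; set q := sinc _ * _.
have -> : \sum_(j < n) (p.2.2 + (eta * c) *: arow) 0 j * v.2.1 0 j =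
    \sum_(j < n) p.2.2 0 j * v.2.1 0 j + eta * c * zlin v.2.1.
  rewrite /zlin mulr_sumr -big_split /=; apply: eq_bigr => j _.
  rewrite !mxE. ring.
ring.
Qed.

Lemma iota_imm p v : 'D_v iota p = 0 -> v = 0.
Proof.
rewrite Diota => E.
have hx : v.1.1 = 0 by have := congr1 (fun u : tgt R n => u.1.1.1) E.
have hy : v.1.2 = 0 by have := congr1 (fun u : tgt R n => u.1.1.2) E.
have hs : v.2.1 = 0 by have := congr1 (fun u : tgt R n => u.2.1) E.
have ht0 := congr1 (fun u : tgt R n => u.2.2) E; rewrite /= in ht0.
have v10 : v.1 = 0 by case: v E hx hy {hs ht0} => [[x y] w] /= _ -> ->.
rewrite dfco_zero// mulr0 scale0r addr0 in ht0.
by case: v E hx hy hs ht0 v10 => [[x y] [s t]] /= _ -> -> -> ->.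
Qed.

Lemma zlinB (s s' : 'rV[R]_n) : zlin (s' - s) = zlin s' - zlin s.
Proof.
rewrite /zlin -sumrB; apply: eq_bigr => j _; rewrite !mxE; ring.
Qed.

Lemma zlin_le (s : 'rV[R]_n) d : (forall j, `|s 0 j| <= d) -> `|zlin s| <= Sa * d.
Proof.
move=> H; rewrite /zlin /Sa mulr_suml; apply: le_trans (ler_norm_sum _ _ _) _.
by apply: ler_sum => j _; rewrite normrM ler_wpM2l.
Qed.

Lemma a_le_Sa j : `|a j| <= Sa.
Proof.
rewrite /Sa (bigD1 j)//= lerDl; exact: sumr_ge0.
Qed.

Section Main2.
Variables (C delta Bm Kb : R).
Hypothesis eta0 : 0 < eta.
Hypothesis C0 : 0 < C.
Hypothesis HBm : 2 * C + 1 <= Bm.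
Hypothesis KbE : pi * Kb = pi + Bm.
Hypothesis aE : forall j, a j = Kb ^+ j.

Lemma Bm0 : 0 <= Bm.
Proof. by apply: le_trans HBm; rewrite addr_ge0// mulr_ge0// ltW. Qed.

Lemma m_zero (m : 'rV[R]_n) : lattice2pi m -> (forall j, `|m 0 j| <= Bm) ->
  `|zlin m| < pi -> m = 0.
Proof.
move=> lm mB zl.
case: (@lat_main _ _ _ Bm0 KbE n (fun j => m 0 j) mB lm) => [allz|].
  by apply/rowP => j; rewrite mxE allz.
have -> : \sum_(j < n) Kb ^+ j * m 0 j = zlin m.
  by apply: eq_bigr => j _; rewrite aE.
by move=> h; have := lt_le_trans zl h; rewrite ltxx.
Qed.

Lemma iota_inj p p' : S_C C delta p -> S_C C delta p' ->
  (exists m, lattice2pi m /\ iota p' = tgt_shift (iota p) m) -> p' = p.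
Proof.
case: p => [[x y] [s t]]; case: p' => [[x' y'] [s' t']] /= [_ Sp] [_ Sp'].
case=> m [lm E].
have ex : x' = x by have := congr1 (fun u : tgt R n => u.1.1.1) E.
have ey : y' = y by have := congr1 (fun u : tgt R n => u.1.1.2) E.
have ez : eta * zlin s' = eta * zlin s by have := congr1 (fun u : tgt R n => u.1.2) E.
have es : s' = s + m by have := congr1 (fun u : tgt R n => u.2.1) E.
have et := congr1 (fun u : tgt R n => u.2.2) E; rewrite /= /fco /= ex ey in et.
have {}et : t' = t by apply: (addIr _ et).
have mE : m = s' - s by rewrite es addrC addKr.
have m0 : m = 0.
  apply: m_zero => //.
  - move=> j; rewrite mE !mxE; apply: le_trans (ler_normB _ _) _.
    have [h1 _] := Sp j; have [h2 _] := Sp' j.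
    by apply: le_trans HBm; lra.
  - rewrite mE zlinB.
    have -> : zlin s' = zlin s by apply: (mulfI (lt0r_neq0 eta0)).
    by rewrite subrr normr0 pi_gt0.
by rewrite es m0 addr0 ex ey et.
Qed.


Lemma tri3 (u v w : R) : `|w| <= `|u| + `|v| + `|u - (v + w)|.
Proof.
have -> : w = (u - v) - (u - (v + w)) by ring.
apply: le_trans (ler_normB _ _) _.
have -> : u - (v + (u - v - (u - (v + w)))) = u - (v + w) by ring.
by rewrite lerD2r; exact: ler_normB.
Qed.

Lemma tgt_parts (u : tgt R n) e : `|u| < e ->
  [/\ `|u.1.1.1| < e, `|u.1.1.2| < e, `|u.1.2| < e,
      forall j, `|u.2.1 0 j| < e & forall j, `|u.2.2 0 j| < e].
Proof.
move=> H.
have h1 := le_lt_trans (norm_fst u) H; have h2 := le_lt_trans (norm_snd u) H.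
have h11 := le_lt_trans (norm_fst u.1) h1; have h12 := le_lt_trans (norm_snd u.1) h1.
have h21 := le_lt_trans (norm_fst u.2) h2; have h22 := le_lt_trans (norm_snd u.2) h2.
split.
- exact: le_lt_trans (norm_fst u.1.1) h11.
- exact: le_lt_trans (norm_snd u.1.1) h11.
- exact: h12.
- move=> j; exact: le_lt_trans (row_entry_le _ j) h21.
- move=> j; exact: le_lt_trans (row_entry_le _ j) h22.
Qed.

Lemma iota_homeo p : S_C C delta p -> forall e : R, 0 < e -> exists2 d : R, 0 < d &
  forall p', S_C C delta p' ->
    (exists m, lattice2pi m /\ `|iota p' - tgt_shift (iota p) m| < d) ->
    `|p' - p| < e.
Proof.
move=> Sp e e0.
have Sa0 : 0 <= Sa by apply: sumr_ge0.
set M := eta * Sa + 1.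
have M0 : 0 < M by rewrite /M ltr_pwDr// mulr_ge0// ltW.
set e1 := e / (2 * M).
have e10 : 0 < e1 by rewrite divr_gt0// mulr_gt0.
have [d1 d10 H1] := cont_eps (differentiable_continuous (fco_diff p)) e10.
pose d := Num.min 1 (Num.min (e / 2) (Num.min d1 (pi * eta / M))).
have pi0 : 0 < pi :> R := pi_gt0 R.
have d0 : 0 < d.
  rewrite /d !lt_min ltr01 d10 /=; apply/andP; split; apply: divr_gt0 => //; exact: mulr_gt0.

have dle1 : d <= 1 by rewrite /d ge_min lexx.
have dle2 : d <= e / 2 by rewrite /d ge_min ge_min lexx orbT.
have dle3 : d <= d1 by rewrite /d ge_min ge_min ge_min lexx !orbT.
have dle4 : d <= pi * eta / M by rewrite /d ge_min ge_min ge_min lexx !orbT.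
exists d => // p' Sp' [m [lm Hu]].
move: Sp Sp' Hu H1; case: p => [[x y] [s t]]; case: p' => [[x' y'] [s' t']].
move=> /= [_ Sp] [_ Sp'] Hu H1.
case: (tgt_parts Hu) => /= hx hy hz hs ht.
have hs' : forall j, `|s' 0 j - (s 0 j + m 0 j)| < d by move=> j; move: (hs j); rewrite !mxE.
set f' := fco (x', y', (s', t')) in ht *; set f := fco (x, y, (s, t)) in ht H1 *.
have ht' : forall j, `|t' 0 j + eta * f' * a j - (t 0 j + eta * f * a j)| < d.
  by move=> j; move: (ht j); rewrite !mxE.
have hz' : `|zlin s' - zlin s| * eta < d.
  by move: hz; rewrite -mulrBr normrM gtr0_norm// mulrC.
have dM : d * M <= pi * eta by rewrite -ler_pdivlMr.
have m0 : m = 0.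
  apply: m_zero => //.
  - move=> j; have [h1 _] := Sp j; have [h2 _] := Sp' j; simpl in h1, h2.
    have := tri3 (s' 0 j) (s 0 j) (m 0 j); have := hs' j.
    move: HBm dle1; lra.
  - have em : m = (s' - s) - (s' - (s + m)) by apply/rowP => j; rewrite !mxE; ring.
    rewrite em zlinB zlinB.
    have hZ : `|zlin (s' - (s + m))| <= Sa * d.
      by apply: zlin_le => j; rewrite !mxE; exact/ltW/hs'.
    apply: le_lt_trans (ler_normB _ _) _.
    set Q := `|_ - _| in hz' *; set Z := `|zlin _| in hZ *.
    have Q0 : 0 <= Q by apply: normr_ge0.
    rewrite /M in dM.
    have : (Q + Z) * eta < pi * eta.
      have h1 : Z * eta <= Sa * d * eta by rewrite ler_wpM2r// ltW.
      have e2 : d * (eta * Sa + 1) = Sa * d * eta + d by ring.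
      rewrite e2 in dM; rewrite mulrDl; lra.
    by rewrite ltr_pM2r.
rewrite m0 in hs'.
apply: norm_pair_lt; [apply: norm_pair_lt|apply: norm_pair_lt] => /=.
- by apply: (lt_le_trans hx); move: dle2 e0; lra.
- by apply: (lt_le_trans hy); move: dle2 e0; lra.
- apply: row_norm_lt => // j; rewrite !mxE.
  by move: (hs' j); rewrite mxE addr0 => h; apply: (lt_le_trans h); move: dle2 e0; lra.
- apply: row_norm_lt => // j; rewrite !mxE.
  have hf : `|f - f'| < e1.
    have := H1 (x', y', (s, t)); apply.
    apply: norm_pair_lt; [apply: norm_pair_lt|apply: norm_pair_lt] => /=.
    + by rewrite distrC; apply: lt_le_trans hx _.
    + by rewrite distrC; apply: lt_le_trans hy _.
    + by apply: row_norm_lt => // k; rewrite !mxE subrr normr0.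
    + by apply: row_norm_lt => // k; rewrite !mxE subrr normr0.
  have E : t' 0 j - t 0 j = (t' 0 j + eta * f' * a j - (t 0 j + eta * f * a j)) + eta * a j * (f - f') by ring.
  rewrite E; apply: le_lt_trans (ler_normD _ _) _.
  have h2 : `|eta * a j * (f - f')| <= eta * Sa * e1.
    rewrite normrM normrM gtr0_norm// -!mulrA; apply: ler_wpM2l; first exact: ltW.
    exact: (ler_pM (normr_ge0 _) (normr_ge0 _) (a_le_Sa j) (ltW hf)).
  have h3 : eta * Sa * e1 < e / 2.
    rewrite /e1 mulrA ltr_pdivrMr ?mulr_gt0//.
    have : eta * Sa * e < M * e by rewrite ltr_pM2r// /M ltrDl.
    rewrite /M; lra.
  have := ht' j; move: dle2; lra.
Qed.

Lemma iota_region delta0 eps p : (1 <= n)%N -> 0 < delta0 -> 0 < delta ->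
  eta * (Sa * C) < eps -> eta * Sa < delta / (2 * Num.sqrt n%:R) ->
  S_C C delta p -> target_region delta0 eps delta (iota p).
Proof.
move=> n1 d00 dl0 hE hD.
case: p => [[x y] [s t]] /= [Hd Sp].
have pi0 : 0 < pi :> R := pi_gt0 R.
split; [|split] => /=.
- have : 0 < pi * delta0 by rewrite mulr_gt0.
  move: Hd; rewrite !expr2 => Hd h; nra.
- apply: le_lt_trans hE; rewrite normrM gtr0_norm//; apply: ler_wpM2l; first exact: ltW.
  by apply: zlin_le => j; have [h _] := Sp j; exact: ltW.
- set tau := delta / (2 * Num.sqrt n%:R).
  have sn0 : 0 < Num.sqrt n%:R :> R by rewrite sqrtr_gt0 ltr0n.
  have fc1 : `|fco (x, y, (s, t))| <= 1 by rewrite fco_cos; exact: cos_max.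
  have Sa0 : 0 <= Sa by apply: sumr_ge0.
  have hP : forall j : 'I_n,
      (t + (eta * fco (x, y, (s, t))) *: arow) 0 j ^+ 2 < (2 * tau) ^+ 2.
    move=> j; rewrite !mxE.
    have [_ ht] := Sp j; simpl in ht.
    have ha : `|eta * fco (x, y, (s, t)) * a j| <= eta * Sa.
      rewrite normrM normrM gtr0_norm// -!mulrA; apply: ler_wpM2l; first exact: ltW.
      rewrite -[Sa]mul1r; exact: (ler_pM (normr_ge0 _) (normr_ge0 _) fc1 (a_le_Sa j)).
    have hp := ler_normD (t 0 j) (eta * fco (x, y, (s, t)) * a j).
    set P := t 0 j + _ in hp *.
    have hP : `|P| < 2 * tau by rewrite -/tau in ht hD; lra.
    have -> : P ^+ 2 = `|P| ^+ 2 by rewrite -normrX ger0_norm // sqr_ge0.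
    have P0 := normr_ge0 P.
    rewrite !expr2; set Q := `|P| in hP P0 *; nra.
  have hs : \sum_(j < n) (t + (eta * fco (x, y, (s, t))) *: arow) 0 j ^+ 2 < \sum_(j < n) (2 * tau) ^+ 2.
    apply: (@ltr_sum R _ (index_enum 'I_n) xpredT) => [|j _]; last exact: hP.
    by apply/hasP; exists (Ordinal n1) => //; rewrite mem_index_enum.
  rewrite sumr_const card_ord in hs.
  have e2 : (2 * tau) ^+ 2 *+ n = delta ^+ 2.
    rewrite -mulr_natl /tau.
    have sq : Num.sqrt n%:R ^+ 2 = n%:R :> R by rewrite sqr_sqrtr ?ler0n.
    rewrite -[X in X * _]sq; field; exact: lt0r_neq0.
  rewrite e2 in hs.
  rewrite -(ger0_norm (ltW dl0)) -sqrtr_sqr ltr_sqrt//; exact: exprn_gt0.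
Qed.
End Main2.
End Main.

Theorem mainTheorem4 (R : realType) (n : nat) (delta0 eps delta C : R) :
  (1 <= n)%N -> 0 < delta0 -> 0 < eps -> 0 < delta -> 0 < C ->
  exists iota : dom R n -> tgt R n,
    [/\ embedding_mod (@S_C R n C delta) iota,
        iota @` @S_C R n C delta `<=` @target_region R n delta0 eps delta
      & forall p, @S_C R n C delta p -> forall v : dom R n,
          alpha (iota p) ('D_v iota p) = 0 <-> beta p v = 0].
Proof.
move=> n1 d00 eps0 dl0 C0.
have pi0 : 0 < pi :> R := pi_gt0 R.
pose Bm : R := 2 * C + 1.
pose Kb : R := 1 + Bm / pi.
pose a := fun j : 'I_n => Kb ^+ j.
have HBm : 2 * C + 1 <= Bm by [].
have KbE : pi * Kb = pi + Bm.
  by rewrite /Kb mulrDr mulr1 mulrCA divff ?mulr1 // lt0r_neq0.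
have aE : forall j, a j = Kb ^+ j by [].
pose S := Sa a.
have S0 : 0 <= S by apply: sumr_ge0.
pose tau := delta / (2 * Num.sqrt n%:R).
have sn0 : 0 < Num.sqrt n%:R :> R by rewrite sqrtr_gt0 ltr0n.
have tau0 : 0 < tau by rewrite divr_gt0// mulr_gt0.
pose eta := Num.min (eps / (S * C + 1)) (tau / (S + 1)).
have SC0 : 0 < S * C + 1 by rewrite ltr_pwDr// mulr_ge0// ltW.
have S10 : 0 < S + 1 by rewrite ltr_pwDr.
have eta0 : 0 < eta by rewrite /eta lt_min; apply/andP; split; apply: divr_gt0.
have hE : eta * (S * C) < eps.
  have h1 : eta <= eps / (S * C + 1) by rewrite /eta ge_min lexx.
  rewrite ler_pdivlMr// in h1.
  apply: lt_le_trans h1; rewrite ltr_pM2l//; lra.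
have hD : eta * S < tau.
  have h1 : eta <= tau / (S + 1) by rewrite /eta ge_min lexx orbT.
  rewrite ler_pdivlMr// in h1.
  apply: lt_le_trans h1; rewrite ltr_pM2l//; lra.
exists (iota eta a); split.
- split.
  + exists setT; split => //; split; first exact: openT.
    by move=> k; exact: iota_Ck.
  + by move=> p v _; exact: iota_imm.
  + move=> p p' Sp Sp' H.
    exact: (iota_inj eta0 C0 HBm KbE aE Sp Sp' H).
  + move=> p Sp e e0.
    exact: (iota_homeo eta0 C0 HBm KbE aE Sp e0).
- move=> _ [p Sp <-].
  exact: (iota_region eta0 n1 d00 dl0 hE hD Sp).
- by move=> p _ v; rewrite alpha_iota.
Qed.
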